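(* Let $X\subset\mathbb{R}^n$ be a closed set which is the closure of its interior, let $f:X\to\mathbb{R}^n$ be locally Lipschitz, and consider $\dot x=f(x)$ with flow $\varphi_t$, assumed forward complete: for each $\xi\in X$ the solution $\varphi_t(\xi)$ is uniquely maximally defined (in $X$) on an interval $I_\xi\subset\mathbb{R}$ containing $[0,+\infty)$ in its interior. Let $K\subset\mathbb{R}^n$ be a closed convex cone with nonempty interior, and suppose the system is strongly monotone: for all $\xi_1,\xi_2\in X$, $\xi_1\succ\xi_2$ implies $\varphi_t(\xi_1)\gg\varphi_t(\xi_2)$ for all $t>0$. Suppose there is $v\in\operatorname{int}(K)$ with $|v|=1$ such that $X$ is invariant under translation by $v$ (i.e. $x\in X\Rightarrow x+\lambda v\in X$ for all $\lambda\in\mathbb{R}$) and the flow is translation invariant: $\varphi_t(\xi+\lambda v)=\varphi_t(\xi)+\lambda v$ for all $\lambda\in\mathbb{R}$, all $\xi\in X$ and all $t$ at which $\varphi_t(\xi)$ is defined. Let $\pi_v(x)=x-(v'x)v$. Then for every $\xi\in X$ such that $t\mapsto\pi_v(\varphi_t(\xi))$ is bounded on $[0,\infty)$, $\pi_v(\varphi_t(\xi))$ converges as $t\to+\infty$ to an equilibrium of the projected system $\dot{\tilde x}=(I-vv')f(\tilde x)$ on $\tilde X=X\cap v^{\perp}$. Moreover, this equilibrium is unique: the projected system has no other equilibrium.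
   Context: The cone $K$ satisfies $K+K\subset K$, $\alpha K\subset K$ for $\alpha\ge 0$, $K\cap(-K)=\{0\}$. Orders: $\xi_1\succeq\xi_2$ iff $\xi_1-\xi_2\in K$; $\xi_1\succ\xi_2$ iff $\xi_1\succeq\xi_2$ and $\xi_1\ne\xi_2$; $\xi_1\gg\xi_2$ iff $\xi_1-\xi_2\in\operatorname{int}(K)$. Prime denotes transpose; $\pi_v$ is the orthogonal projection onto $v^\perp$. *)

(* Defs.v *)
From HB Require Import structures.
From mathcomp Require Import all_boot all_order all_algebra.
From mathcomp Require Import all_classical all_reals all_analysis.
Set Implicit Arguments. Unset Strict Implicit. Unset Printing Implicit Defensive.
Import Order.TTheory GRing.Theory Num.Theory.
Import numFieldNormedType.Exports.
Local Open Scope classical_set_scope.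
Local Open Scope ring_scope.

Section Defs.
Variables (R : realType) (n : nat).
Local Notation V := 'rV[R]_n.

Definition dotv (u w : V) : R := (u *m w^T) 0 0.

Definition pi_v (v x : V) : V := x - dotv v x *: v.

(* the projected vector field (I - v v') f, written for row vectors *)
Definition proj_field (v : V) (f : V -> V) (x : V) : V :=
  f x *m (1%:M - v^T *m v).

Definition cone (K : set V) :=
  [/\ forall x y, K x -> K y -> K (x + y),
      forall (a : R) x, 0 <= a -> K x -> K (a *: x) &
      forall x, K x -> K (- x) -> x = 0].

Definition ord_ge (K : set V) (x y : V) := K (x - y).
Definition ord_gt (K : set V) (x y : V) := K (x - y) /\ x <> y.
Definition ord_gg (K : set V) (x y : V) := (interior K) (x - y).

Definition locally_lipschitz (X : set V) (f : V -> V) :=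
  forall x, X x -> exists2 r : R, 0 < r & exists L : R,
    forall y z, X y -> X z -> `|y - x| < r -> `|z - x| < r ->
      `|f y - f z| <= L * `|y - z|.

Definition is_itv (J : set R) :=
  forall a b c, J a -> J c -> a <= b -> b <= c -> J b.

(* y is a solution of x' = f(x) in X on the interval J
   (derivative taken within J, i.e. one-sided at endpoints of J) *)
Definition is_sol (X : set V) (f : V -> V) (J : set R) (y : R -> V) :=
  (forall t, J t -> X (y t)) /\
  forall t, J t ->
    (fun s => (s - t)^-1 *: (y s - y t)) @ within (fun s => J s /\ s <> t) (nbhs t)
      --> f (y t).

Definition forward_complete_flow (X : set V) (f : V -> V)
    (I : V -> set R) (phi : R -> V -> V) :=
  forall xi, X xi ->
    [/\ is_itv (I xi),
        `[0, +oo[ `<=` interior (I xi),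
        phi 0 xi = xi,
        is_sol X f (I xi) (fun t => phi t xi) &
        forall (J : set R) (y : R -> V), is_itv J -> J 0 -> y 0 = xi ->
          is_sol X f J y -> J `<=` I xi /\ (forall t, J t -> y t = phi t xi)].

End Defs.

(* Main.v *)
Require Import Defs.
From HB Require Import structures.
From mathcomp Require Import all_boot all_order all_algebra.
From mathcomp Require Import all_classical all_reals all_analysis.
From mathcomp Require Import ring lra.
Import Order.TTheory GRing.Theory Num.Theory.
Import numFieldNormedType.Exports.
Local Open Scope classical_set_scope.
Local Open Scope ring_scope.
Set Implicit Arguments. Unset Strict Implicit. Unset Printing Implicit Defensive.
Ltac vring := apply/matrixP=> ? ?; rewrite !mxE; ring.
Section S.
Variables (R : realType) (n : nat) (X : set 'rV[R]_n)
  (f : 'rV[R]_n -> 'rV[R]_n) (I : 'rV[R]_n -> set R)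
  (phi : R -> 'rV[R]_n -> 'rV[R]_n) (K : set 'rV[R]_n) (v : 'rV[R]_n).
Local Notation V := 'rV[R]_n.
Hypothesis HK : cone K.
Hypothesis HKc : closed K.
Hypothesis Hv : interior K v.
Hypothesis Hvv : dotv v v = 1.

Lemma Kadd x y : K x -> K y -> K (x + y).
Proof. by case: HK => h _ _; apply: h. Qed.
Lemma Kscale (a : R) x : 0 <= a -> K x -> K (a *: x).
Proof. by case: HK => _ h _; apply: h. Qed.
Lemma Kpt x : K x -> K (- x) -> x = 0.
Proof. by case: HK => _ _ h; apply: h. Qed.
Lemma Kv : K v.
Proof. exact: interior_subset. Qed.
Lemma K0 : K 0.
Proof. by rewrite -(scale0r v); apply: Kscale => //; apply: Kv. Qed.
Lemma v_neq0 : v != 0.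
Proof.
apply/eqP => v0; move: Hvv; rewrite v0 /dotv mul0mx mxE => /eqP.
by rewrite eq_sym oner_eq0.
Qed.
Lemma Knv c : c < 0 -> ~ K (c *: v).
Proof.
move=> c0 Kc; have : K (- v).
  have -> : - v = (- c^-1) *: (c *: v).
    by rewrite scalerA mulNr mulVf ?ltr0_neq0 // scaleN1r.
  by apply: Kscale => //; rewrite oppr_ge0 invr_le0 ltW.
by move=> /(Kpt Kv) /eqP; apply/negP; apply: v_neq0.
Qed.
Lemma Kball : exists2 r : R, 0 < r & forall w, `|w| < r -> K (v + w).
Proof.
have := Hv; rewrite /interior /= => /nbhs_ballP [r r0 hr].
exists r => // w hw; apply: hr; rewrite -ball_normE /ball_ /=.
by rewrite opprD addNKr normrN.
Qed.
Definition Aset x y := [set l : R | K (x + l *: v - y)].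

Lemma A_up x y l m : Aset x y l -> l <= m -> Aset x y m.
Proof.
rewrite /Aset /= => hl lm.
have -> : x + m *: v - y = (x + l *: v - y) + (m - l) *: v by vring.
by apply: Kadd => //; apply: Kscale; [rewrite subr_ge0 | apply: Kv].
Qed.

Lemma A_ne x y : exists l, Aset x y l.
Proof.
have [r r0 hr] := Kball.
set w := x - y; set l := (`|w| + 1) / r.
have l0 : 0 < l by rewrite divr_gt0 // ltr_wpDl.
exists l; rewrite /Aset /=.
have -> : x + l *: v - y = l *: (v + l^-1 *: w).
  by rewrite scalerDr scalerA mulfV ?gt_eqF // scale1r /w; vring.
apply: Kscale; first exact: ltW.
apply: hr; rewrite normrZ ger0_norm ?invr_ge0 ?ltW // /l invf_div.
rewrite mulrAC ltr_pdivrMr ?ltr_wpDl //.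
by rewrite mulrDr mulr1 ltrDl.
Qed.

Lemma A_sub x y l r : 0 < r -> (forall w, `|w| < r -> K (v + w)) ->
  Aset x y l -> `|x - y| < r * (- l) -> v = (- l)^-1 *: (x - y).
Proof.
move=> r0 hr hl hlt.
have l0 : 0 < - l.
  by rewrite -(pmulr_rgt0 _ r0); apply: le_lt_trans hlt.
set c := (- l)^-1.
have c0 : 0 < c by rewrite invr_gt0.
have cl : c * l = -1 by rewrite /c invrN mulNr mulVf ?ltr0_neq0 // -oppr_gt0.
have h1 : K (c *: (x - y) - v).
  have -> : c *: (x - y) - v = c *: (x + l *: v - y).
    rewrite [RHS](_ : _ = c *: (x - y) + (c * l) *: v); first by rewrite cl; vring.
    vring.
  by apply: Kscale => //; apply: ltW.
have h2 : K (- (c *: (x - y) - v)).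
  rewrite opprB; apply: hr; rewrite normrN normrZ gtr0_norm //.
  by rewrite /c mulrC ltr_pdivrMr.
by have /eqP := Kpt h1 h2; rewrite subr_eq0 => /eqP ->.
Qed.
Lemma A_lb x y : exists b, forall l, Aset x y l -> b <= l.
Proof.
have [r r0 hr] := Kball.
exists (- (`|x - y| / r) - 1) => l hl; rewrite leNgt; apply/negP => lb.
set b := - (`|x - y| / r) - 1.
have hb : Aset x y b by apply: A_up hl (ltW lb).
have rb : `|x - y| < r * (- b).
  by rewrite /b opprB opprK mulrDr mulr1 mulrCA mulfV ?gt_eqF // mulr1 ltrDr.
have rl : `|x - y| < r * (- l).
  by apply: lt_le_trans rb _; rewrite ler_pM2l // lerN2 ltW.
have e1 := A_sub r0 hr hl rl; have e2 := A_sub r0 hr hb rb.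
have : ((- l)^-1 - (- b)^-1) *: (x - y) = 0 by rewrite scalerBl -e1 -e2 subrr.
move/eqP; rewrite scaler_eq0 => /orP[].
  rewrite subr_eq0 => /eqP /invr_inj /oppr_inj lbe.
  by move: lb; rewrite lbe ltxx.
move=> /eqP xy0; move: e1; rewrite xy0 scaler0 => v0.
by move: v_neq0; rewrite v0 eqxx.
Qed.

Definition M x y := inf (Aset x y).

Lemma A_hasinf x y : has_inf (Aset x y).
Proof.
split; first by have [l hl] := A_ne x y; exists l.
by have [b hb] := A_lb x y; exists b.
Qed.

Lemma M_le x y l : Aset x y l -> M x y <= l.
Proof. by move=> hl; apply: ge_inf => //; case: (A_hasinf x y). Qed.

Lemma M_in x y : Aset x y (M x y).
Proof.
apply: HKc => B /nbhs_ballP [d d0 hd].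
set e := d / (`|v| + 1).
have e0 : 0 < e by rewrite divr_gt0 // ltr_wpDl.
have [l hl lt] := inf_adherent e0 (A_hasinf x y).
exists (x + (M x y + e) *: v - y); split.
  by apply: A_up hl _; apply: ltW.
apply: hd; rewrite -ball_normE /ball_ /=.
have -> : x + M x y *: v - y - (x + (M x y + e) *: v - y) = - (e *: v) by vring.
rewrite normrN normrZ gtr0_norm // /e mulrAC ltr_pdivrMr ?ltr_wpDl //.
by rewrite ltr_pM2l // ltrDl.
Qed.

Lemma M_char x y m : Aset x y m -> (forall l, Aset x y l -> m <= l) -> M x y = m.
Proof.
by move=> hm hl; apply/eqP; rewrite eq_le M_le //= hl //; apply: M_in.
Qed.
Lemma M_tr x y a b : M (x + a *: v) (y + b *: v) = M x y + b - a.
Proof.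
apply: M_char.
  rewrite /Aset /=.
  have -> : x + a *: v + (M x y + b - a) *: v - (y + b *: v) = x + M x y *: v - y by vring.
  exact: M_in.
move=> l hl; have : Aset x y (l + a - b).
  move: hl; rewrite /Aset /=.
  have -> : x + a *: v + l *: v - (y + b *: v) = x + (l + a - b) *: v - y by vring.
  by [].
move=> /M_le; lra.
Qed.

Definition close e p q := K (q - p + e *: v) /\ K (p - q + e *: v).

Lemma close_sym e p q : close e p q -> close e q p.
Proof. by case. Qed.

Lemma M_close e p q p' q' : close e p q -> close e p' q' -> M q q' <= M p p' + 2 * e.
Proof.
move=> [h1 _] [_ h2]; apply: M_le; rewrite /Aset /=.
have -> : q + (M p p' + 2 * e) *: v - q' =
  (q - p + e *: v) + (p + M p p' *: v - p') + (p' - q' + e *: v) by vring.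
by apply: Kadd; [apply: Kadd => //; apply: M_in|].
Qed.

Definition D x y := M x y + M y x.

Lemma D_close e p q p' q' : close e p q -> close e p' q' -> D q q' <= D p p' + 4 * e.
Proof.
move=> h h'; have := M_close h h'; have := M_close h' h.
rewrite /D; lra.
Qed.

Lemma D_tr x y a b : D (x + a *: v) (y + b *: v) = D x y.
Proof. by rewrite /D !M_tr; lra. Qed.

Lemma D_ge0 x y : 0 <= D x y.
Proof.
rewrite leNgt; apply/negP => hlt; apply: (Knv hlt).
have -> : D x y *: v = (x + M x y *: v - y) + (y + M y x *: v - x) by rewrite /D; vring.
by apply: Kadd; apply: M_in.
Qed.

Lemma norm_close : exists2 r : R, 0 < r & forall e p q, 0 < e -> `|q - p| < e * r -> close e p q.
Proof.
have [r r0 hr] := Kball; exists r => // e p q e0 hqp.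
have key : forall w, `|w| < e * r -> K (w + e *: v).
  move=> w hw; have -> : w + e *: v = e *: (v + e^-1 *: w).
    by rewrite scalerDr scalerA mulfV ?gt_eqF // scale1r addrC.
  apply: Kscale; first exact: ltW.
  apply: hr; rewrite normrZ gtr0_norm ?invr_gt0 // mulrC ltr_pdivrMr //.
  by rewrite mulrC.
split; apply: key => //; by rewrite -normrN opprB.
Qed.
Hypothesis HFC : forward_complete_flow X f I phi.
Hypothesis Hsm : forall xi1 xi2, X xi1 -> X xi2 -> ord_gt K xi1 xi2 ->
     forall t, 0 < t -> ord_gg K (phi t xi1) (phi t xi2).
Hypothesis HXt : forall x (lam : R), X x -> X (x + lam *: v).
Hypothesis Hpt : forall xi (lam : R) t, X xi -> I xi t ->
     phi t (xi + lam *: v) = phi t xi + lam *: v.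

Lemma dom0 xi t : X xi -> 0 <= t -> I xi t.
Proof.
move=> /HFC [_ h _ _ _] t0; apply: interior_subset; apply: h.
by rewrite /= in_itv /= t0.
Qed.

Lemma phi0 xi : X xi -> phi 0 xi = xi.
Proof. by move=> /HFC []. Qed.

Lemma phiX xi t : X xi -> 0 <= t -> X (phi t xi).
Proof. by move=> hx t0; have [_ _ _ [h _] _] := HFC hx; apply: h; apply: dom0. Qed.

Lemma phi_tr xi a t : X xi -> 0 <= t -> phi t (xi + a *: v) = phi t xi + a *: v.
Proof. by move=> hx t0; apply: Hpt => //; apply: dom0. Qed.

Lemma mono x y t : X x -> X y -> K (x - y) -> 0 <= t -> K (phi t x - phi t y).
Proof.
move=> hx hy hk; rewrite le_eqVlt => /orP[/eqP <-|t0].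
  by rewrite !phi0.
have [<-|nxy] := eqVneq x y; first by rewrite subrr; apply: K0.
by apply: interior_subset; apply: Hsm => //; split => //; apply/eqP.
Qed.

Lemma M_mono x y t : X x -> X y -> 0 <= t -> M (phi t x) (phi t y) <= M x y.
Proof.
move=> hx hy t0; apply: M_le; rewrite /Aset /= -phi_tr //.
by apply: mono => //; [apply: HXt | apply: M_in].
Qed.

Lemma D_mono x y t : X x -> X y -> 0 <= t -> D (phi t x) (phi t y) <= D x y.
Proof. by move=> hx hy t0; apply: lerD; apply: M_mono. Qed.

Lemma M_strict x y t : X x -> X y -> 0 < t -> (forall k, y <> x + k *: v) ->
  M (phi t x) (phi t y) < M x y.
Proof.
move=> hx hy t0 nk; set m := M x y.
have hw : X (x + m *: v) by apply: HXt.
have hgt : ord_gt K (x + m *: v) y.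
  split; first by apply: M_in.
  by move=> e; apply: (nk m).
have := Hsm hw hy hgt t0; rewrite /ord_gg phi_tr //; last exact: ltW.
rewrite /interior /= => /nbhs_ballP [d d0 hd].
set e := d / (`|v| + 1).
have e0 : 0 < e by rewrite divr_gt0 // ltr_wpDl.
have : Aset (phi t x) (phi t y) (m - e).
  rewrite /Aset /=; apply: hd; rewrite -ball_normE /ball_ /=.
  have -> : phi t x + m *: v - phi t y - (phi t x + (m - e) *: v - phi t y) = e *: v by vring.
  rewrite normrZ gtr0_norm // /e mulrAC ltr_pdivrMr ?ltr_wpDl //.
  by rewrite ltr_pM2l // ltrDl.
by move=> /M_le h; apply: le_lt_trans h _; rewrite ltrBlDr ltrDl.
Qed.

Lemma KL x y t : X x -> X y -> 0 < t -> D x y <= D (phi t x) (phi t y) ->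
  exists k, y = x + k *: v.
Proof.
move=> hx hy t0 hD; have [//|nk] := pselect (exists k, y = x + k *: v).
have nk' : forall k, y <> x + k *: v by move=> k e; apply: nk; exists k.
have h1 := M_strict hx hy t0 nk'.
have h2 := M_mono hy hx (ltW t0).
by move: hD; rewrite /D; lra.
Qed.
Lemma semigroup xi s t : X xi -> 0 <= s -> 0 <= t -> phi t (phi s xi) = phi (t + s) xi.
Proof.
move=> hx s0 t0.
have [hI _ _ [hX hD] _] := HFC hx.
have hy : X (phi s xi) by apply: phiX.
have [_ _ _ _ U] := HFC hy.
set J := [set u | I xi (u + s)].
have J1 : is_itv J.
  move=> a b c Ja Jc ab bc; apply: (hI (a + s) (b + s) (c + s)) => //; by rewrite lerD2r.
have J2 : J 0 by rewrite /J /= add0r; apply: dom0.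
have J3 : (fun u => phi (u + s) xi) 0 = phi s xi by rewrite /= add0r.
have J4 : is_sol X f J (fun u => phi (u + s) xi).
  split; first by move=> u Ju; apply: hX.
  move=> u Ju; have H := hD (u + s) Ju.
  have -> : (fun w => (w - u)^-1 *: (phi (w + s) xi - phi (u + s) xi)) =
     (fun w' => (w' - (u + s))^-1 *: (phi w' xi - phi (u + s) xi)) \o (fun w => w + s).
    by apply: funext => w /=; rewrite opprD addrACA subrr addr0.
  have K1 : (fun w => w + s) @ within (fun w => J w /\ w <> u) (nbhs u) -->
     within (fun w => I xi w /\ w <> u + s) (nbhs (u + s)).
    move=> P /= HP.
    have hc : (fun w => w + s) @ nbhs u --> nbhs (u + s).
      by apply: cvgD; [exact: cvg_id | exact: cvg_cst].
    have := hc _ HP; move=> h; rewrite /within /=.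
    have h' : nbhs u (fun w => I xi (w + s) /\ w + s <> u + s -> P (w + s)) := h.
    suff : nbhs u (fun w => J w /\ w <> u -> P (w + s)) by [].
    apply: filterS h' => w hP [Jw nw]; apply: hP; split => //; by move=> /addIr.

  exact: (cvg_comp _ _ K1 H).
have [_ <-] // := U J _ J1 J2 J3 J4.
by rewrite /J /= ; apply: dom0 => //; apply: addr_ge0.
Qed.
Lemma quot_right xi : X xi -> (fun s => s^-1 *: (phi s xi - xi)) @ 0^'+ --> f xi.
Proof.
move=> hx; have [_ _ _ [_ hD] _] := HFC hx.
have H := hD 0 (dom0 hx (lexx 0)); rewrite phi0 // in H.
have -> : (fun s => s^-1 *: (phi s xi - xi)) = (fun s => (s - 0)^-1 *: (phi s xi - phi 0 xi)).
  by apply: funext => s; rewrite subr0 phi0.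
have K1 : (fun s => s) @ 0^'+ --> within (fun s => I xi s /\ s <> 0) (nbhs 0).
  apply: within_subset => s /= s0; split.
    by apply: dom0 => //; apply: ltW.
  by move=> e; move: s0; rewrite e ltxx.
rewrite phi0 //; exact: (cvg_comp _ _ K1 H).
Qed.

Lemma f_tr x a : X x -> f (x + a *: v) = f x.
Proof.
move=> hx; have h1 := quot_right (HXt a hx); have h2 := quot_right hx.
have h1' : (fun s => s^-1 *: (phi s x - x)) @ 0^'+ --> f (x + a *: v).
  apply: cvg_trans h1; apply: near_eq_cvg; near=> s.
  have s0 : 0 < s by near: s; exact: nbhs_right_gt.
  rewrite phi_tr //.
  have -> : phi s x + a *: v - (x + a *: v) = phi s x - x by vring.
  by [].
exact: (cvg_unique _ h1' h2).
Unshelve. all: by end_near.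
Qed.

Lemma eq_flow e c : X e -> f e = c *: v -> forall t, 0 <= t -> phi t e = e + (c * t) *: v.
Proof.
move=> he fe t t0.
have [_ _ _ _ U] := HFC he.
have J1 : is_itv (@setT R) by [].
have J2 : (@setT R) 0 by [].
have J3 : (fun t => e + (c * t) *: v) 0 = e by rewrite /= mulr0 scale0r addr0.
have J4 : is_sol X f setT (fun t => e + (c * t) *: v).
  split; first by move=> u _; apply: HXt.
  move=> u _; rewrite f_tr // fe.
  move=> P /= hP.
  suff : nbhs u (fun s => setT s /\ s <> u ->
     P ((s - u)^-1 *: (e + (c * s) *: v - (e + (c * u) *: v)))) by [].
  apply: filterE => s [_ su].
  have -> : e + (c * s) *: v - (e + (c * u) *: v) = ((s - u) * c) *: v by vring.
  rewrite scalerA mulrA mulVf ?mul1r; first exact: nbhs_singleton hP.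
  by rewrite subr_eq0; apply/eqP.
by have [_ <-] := U _ _ J1 J2 J3 J4.
Qed.
Lemma projE w : w *m (1%:M - v^T *m v) = w - (w *m v^T) 0 0 *: v.
Proof.
rewrite mulmxBr mulmx1 mulmxA; congr (_ - _).
by rewrite {1}[w *m v^T]mx11_scalar mul_scalar_mx.
Qed.

Lemma proj_eq e : proj_field v f e = 0 <-> exists c, f e = c *: v.
Proof.
rewrite /proj_field projE; split.
  by move=> /eqP; rewrite subr_eq0 => /eqP h; eexists; exact: h.
move=> [c ->]; rewrite -scalemxAl mxE.
by have := Hvv; rewrite /dotv => ->; rewrite mulr1 subrr.
Qed.

Lemma dotvD x y : dotv v (x + y) = dotv v x + dotv v y.
Proof. by rewrite /dotv linearD /= mulmxDr mxE. Qed.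
Lemma dotvZ a x : dotv v (a *: x) = a * dotv v x.
Proof. by rewrite /dotv linearZ /= -scalemxAr mxE. Qed.

Lemma eq_unique e1 e2 c1 c2 : X e1 -> X e2 -> dotv v e1 = 0 -> dotv v e2 = 0 ->
  f e1 = c1 *: v -> f e2 = c2 *: v -> e1 = e2.
Proof.
move=> h1 h2 d1 d2 f1 f2.
have [k ek] : exists k, e2 = e1 + k *: v.
  apply: (@KL e1 e2 1) => //.
  by rewrite (eq_flow h1 f1) // (eq_flow h2 f2) // D_tr.
move: d2; rewrite ek dotvD dotvZ d1 Hvv add0r mulr1 => k0.
by rewrite k0 scale0r addr0.
Qed.

Lemma v_coord : exists i, v 0 i != 0.
Proof.
case: (pselect (exists i, v 0 i != 0)) => // nk; exfalso.
move: v_neq0; apply/negP; rewrite negbK; apply/eqP/matrixP => i j.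
rewrite mxE (ord1 i); apply/eqP; apply/negPn/negP => hj; apply: nk; exists j.
exact: hj.
Qed.

Lemma span_limit p : X p -> (forall s, 0 < s -> exists k, phi s p = p + k *: v) ->
  exists c, f p = c *: v.
Proof.
move=> hp hs; have h := quot_right hp.
have [i0 hi0] := v_coord.
exists (f p 0 i0 / v 0 i0); apply/matrixP => i j; rewrite (ord1 i) mxE.
have hj := cvg_comp _ _ h (@coord_continuous R 1 n 0 j (f p)).
have hi := cvg_comp _ _ h (@coord_continuous R 1 n 0 i0 (f p)).
have hi' := cvgMr_tmp (b := v 0 j) (cvgMr_tmp (b := (v 0 i0)^-1) hi).
have hj' : ((fun M : 'rV_n => M 0 j) \o (fun s : R => s^-1 *: (phi s p - p))) @ 0^'+
   --> (f p 0 i0 * (v 0 i0)^-1 * v 0 j).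
  apply: (cvg_trans _ (hi' _ _)); apply: near_eq_cvg; near=> s.
  have s0 : 0 < s by near: s; exact: nbhs_right_gt.
  have [k hk] := hs s s0; rewrite /= hk.
  rewrite /= addrAC subrr add0r !mxE.
  by rewrite mulrA mulfK // mulrA.
exact: (cvg_unique _ hj hj').
Unshelve. all: by end_near.
Qed.
Lemma dotv_pi x : dotv v (pi_v v x) = 0.
Proof.
by rewrite /pi_v -scaleNr dotvD dotvZ Hvv mulr1 addrN.
Qed.

Lemma pi_tr x : pi_v v x = x + (- dotv v x) *: v.
Proof. by rewrite /pi_v scaleNr. Qed.

Lemma close_flow e p q a : X p -> X q -> close e p q -> 0 <= a ->
  close e (phi a p) (phi a q).
Proof.
move=> hp hq [h1 h2] a0; split.
  have := @mono q (p + (- e) *: v) a hq (HXt _ hp).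
  rewrite phi_tr //.
  have -> : phi a q - (phi a p + - e *: v) = phi a q - phi a p + e *: v by vring.
  apply => //.
  by have -> : q - (p + - e *: v) = q - p + e *: v by vring.
have := @mono p (q + (- e) *: v) a hp (HXt _ hq).
rewrite phi_tr //.
have -> : phi a p - (phi a q + - e *: v) = phi a p - phi a q + e *: v by vring.
apply => //.
by have -> : p - (q + - e *: v) = p - q + e *: v by vring.
Qed.

Lemma D_flow_close e p q a b : X p -> X q -> close e p q -> 0 <= a -> 0 <= b ->
  D (phi a q) (phi b q) <= D (phi a p) (phi b p) + 4 * e /\
  D (phi a p) (phi b p) <= D (phi a q) (phi b q) + 4 * e.
Proof.
move=> hp hq hc a0 b0.
have ha := close_flow hp hq hc a0; have hb := close_flow hp hq hc b0.
split; first exact: D_close.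
exact: D_close (close_sym ha) (close_sym hb).
Qed.

Lemma dotv_cont : continuous (fun q : 'rV[R]_n => dotv v q).
Proof.
have -> : (fun q : 'rV[R]_n => dotv v q) = (fun q => \sum_(j < n) v 0 j * q 0 j).
  apply: funext => q; rewrite /dotv mxE; apply: eq_bigr => j _; by rewrite mxE.
apply: continuous_big; first exact: add_continuous.
move=> j _ q; have hc := @coord_continuous R 1 n 0 j q; exact: (cvgMl_tmp (a := v 0 j) hc).
Qed.

Lemma closed_S : closed X -> closed [set q | X q /\ dotv v q = 0].
Proof.
move=> hX; have -> : [set q | X q /\ dotv v q = 0] = X `&` ((fun q => dotv v q) @^-1` [set 0]).
  by [].
apply: closedI => //; apply: preimage_closed; first by move=> q _; apply: dotv_cont.
exact: closed_eq.
Qed.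
Definition g xi t := pi_v v (phi t xi).

Lemma g_X xi t : X xi -> 0 <= t -> X (g xi t).
Proof. by move=> hx t0; rewrite /g pi_tr; apply: HXt; apply: phiX. Qed.

Lemma g_flow xi t a : X xi -> 0 <= t -> 0 <= a ->
  phi a (g xi t) = phi (a + t) xi + (- dotv v (phi t xi)) *: v.
Proof.
by move=> hx t0 a0; rewrite /g pi_tr phi_tr ?semigroup //; apply: phiX.
Qed.

Lemma D_g xi t a b : X xi -> 0 <= t -> 0 <= a -> 0 <= b ->
  D (phi a (g xi t)) (phi b (g xi t)) = D (phi (a + t) xi) (phi (b + t) xi).
Proof. by move=> hx t0 a0 b0; rewrite !g_flow // D_tr. Qed.

Lemma h_mono xi s t t' : X xi -> 0 <= s -> 0 <= t -> t <= t' ->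
  D (phi t' xi) (phi (t' + s) xi) <= D (phi t xi) (phi (t + s) xi).
Proof.
move=> hx s0 t0 tt.
have d0 : 0 <= t' - t by rewrite subr_ge0.
have e1 : phi t' xi = phi (t' - t) (phi t xi) by rewrite semigroup // subrK.
have e2 : phi (t' + s) xi = phi (t' - t) (phi (t + s) xi).
  rewrite semigroup //; last exact: addr_ge0.
  by congr phi; ring.
rewrite e1 e2; apply: D_mono => //; apply: phiX => //; exact: addr_ge0.
Qed.

Lemma cluster_near xi p : cluster ((g xi) @ +oo) p ->
  forall T e, 0 < e -> exists t, T <= t /\ `|g xi t - p| < e.
Proof.
move=> hc T e e0.
have FA : ((g xi) @ +oo) [set q | exists t, T <= t /\ q = g xi t].
  exists T; split; first exact: num_real.
  by move=> t Tt /=; exists t; split => //; apply: ltW.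
have [q [[t [Tt ->]] hb]] := hc _ _ FA (nbhsx_ballx p e e0).
exists t; split => //; move: hb; rewrite -ball_normE /ball_ /=.
by rewrite distrC.
Qed.

Lemma cl_equil xi p : X xi -> closed X -> cluster ((g xi) @ +oo) p ->
  [/\ X p, dotv v p = 0 & exists c, f p = c *: v].
Proof.
move=> hx hX hc.
have Sp : X p /\ dotv v p = 0.
  apply: (closed_S hX) => B hB.
  have FS : ((g xi) @ +oo) [set q | X q /\ dotv v q = 0].
    exists 0; split; first exact: num_real.
    move=> t t0 /=; split; first by apply: g_X => //; apply: ltW.
    exact: dotv_pi.
  exact: hc _ _ FS hB.
case: Sp => hp dp; split => //.
apply: span_limit => // s s0.
have hps : X (phi s p) by apply: phiX => //; apply: ltW.
apply: (@KL p (phi s p) 1) => //.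
rewrite semigroup //; last exact: ltW.
rewrite leNgt; apply/negP => hlt.
have [e he] : exists e : R, e = (D p (phi s p) - D (phi 1 p) (phi (1 + s) p)) / 10 by eexists.
have e0 : 0 < e by rewrite he divr_gt0 // subr_gt0.
have [r r0 hr] := norm_close.
have er0 : 0 < e * r by apply: mulr_gt0.
have [t0 [t00 ht0]] := cluster_near hc 0 er0.
have c0 := hr e p (g xi t0) e0 ht0.
have s0' : 0 <= 1 + s by apply: addr_ge0 => //; apply: ltW.
have [h0 _] := D_flow_close hp (g_X hx t00) c0 ler01 s0'.
rewrite D_g // in h0.
have t0' : 0 <= 1 + t0 by apply: addr_ge0.
have [t1 [t1T ht1]] := cluster_near hc (1 + t0) er0.
have t10 : 0 <= t1 by apply: le_trans t1T.
have c1 := hr e p (g xi t1) e0 ht1.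
have [_ h1] := D_flow_close hp (g_X hx t10) c1 (lexx 0) (ltW s0).
rewrite D_g // ?phi0 // in h1; last exact: ltW.
have hm := h_mono hx (ltW s0) t0' t1T.
have E1 : 1 + s + t0 = 1 + t0 + s by ring.
rewrite E1 in h0; rewrite add0r (addrC s t1) in h1.
move: h0 h1 hm; lra.
Qed.
Lemma cptB (B : R) : compact [set q : 'rV[R]_n | `|q| <= B].
Proof.
apply: bounded_closed_compact.
  exists B; split; first exact: num_real.
  by move=> y By q /= hq; apply: le_trans hq (ltW By).
have -> : [set q : 'rV[R]_n | `|q| <= B] = (fun q : 'rV[R]_n => `|q|) @^-1` [set x | x <= B] by [].
apply: preimage_closed; first by move=> q _; apply: norm_continuous.
exact: closed_le.
Qed.

Lemma main_sec : closed X -> forall xi, X xi ->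
  (exists Mb : R, forall t, 0 <= t -> `|pi_v v (phi t xi)| <= Mb) ->
  exists e : 'rV[R]_n,
    [/\ X e, dotv v e = 0, proj_field v f e = 0,
        pi_v v (phi t xi) @[t --> +oo] --> e &
        forall e' : 'rV[R]_n, X e' -> dotv v e' = 0 ->
          proj_field v f e' = 0 -> e' = e].
Proof.
move=> hX xi hxi [Mb hMb].
have Mb0 : 0 <= Mb by apply: le_trans (hMb 0 (lexx 0)).
have FV : forall B, Mb <= B -> ((g xi) @ +oo) [set q | `|q| <= B].
  move=> B MB; exists 0; split; first exact: num_real.
  by move=> t t0 /=; apply: le_trans MB; apply: hMb; apply: ltW.
have [p [_ hp]] := @cptB Mb ((g xi) @ +oo) _ (FV Mb (lexx _)).
have [Xp dp [c fp]] := cl_equil hxi hX hp.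
exists p; split => //.
- by apply/proj_eq; exists c.
- apply: (@compact_cluster_set1 _ p ((g xi) @ +oo) [set q | `|q| <= Mb + `|p| + 1]).
  + exact: norm_hausdorff.
  + exact: cptB.
  + apply/nbhs_ballP; exists 1; first exact: ltr01.
    move=> q; rewrite -ball_normE /ball_ /= => hq.
    have := ler_normB p (p - q); rewrite opprB addrCA subrr addr0.
    move=> h; apply: (le_trans h); rewrite [Mb + _]addrC -addrA lerD2l.
    apply: le_trans (ltW hq) _; rewrite -[X in X <= _]add0r lerD2r; exact: Mb0.
  + apply: FV; have := normr_ge0 p; move: Mb0 => /= Mb0; lra.
  + apply/seteqP; split => q /=; last by move=> ->.
    move=> hq; have [Xq dq [cq fq]] := cl_equil hxi hX hq.
    exact: eq_unique Xq Xp dq dp fq fp.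
- move=> e' Xe' de' /proj_eq [c' fe'].
  exact: eq_unique Xe' Xp de' dp fe' fp.
Qed.
End S.

Unset Implicit Arguments.

Theorem theorem1 (R : realType) (n : nat) (X : set 'rV[R]_n)
  (f : 'rV[R]_n -> 'rV[R]_n) (I : 'rV[R]_n -> set R)
  (phi : R -> 'rV[R]_n -> 'rV[R]_n) (K : set 'rV[R]_n) (v : 'rV[R]_n) :
  closed X ->
  closure (interior X) = X ->
  locally_lipschitz X f ->
  forward_complete_flow X f I phi ->
  cone K -> closed K -> (exists x, interior K x) ->
  (forall xi1 xi2, X xi1 -> X xi2 -> ord_gt K xi1 xi2 ->
     forall t, 0 < t -> ord_gg K (phi t xi1) (phi t xi2)) ->
  interior K v -> dotv v v = 1 ->
  (forall x (lam : R), X x -> X (x + lam *: v)) ->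
  (forall xi (lam : R) t, X xi -> I xi t ->
     phi t (xi + lam *: v) = phi t xi + lam *: v) ->
  forall xi, X xi ->
  (exists M : R, forall t, 0 <= t -> `|pi_v v (phi t xi)| <= M) ->
  exists e : 'rV[R]_n,
    [/\ X e, dotv v e = 0, proj_field v f e = 0,
        pi_v v (phi t xi) @[t --> +oo] --> e &
        forall e' : 'rV[R]_n, X e' -> dotv v e' = 0 ->
          proj_field v f e' = 0 -> e' = e].
Proof.
move=> hX _ _ HFC HK HKc _ Hsm Hv Hvv HXt Hpt.
exact: (main_sec HK HKc Hv Hvv HFC Hsm HXt Hpt hX).
Qed.
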